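(* Let $\mathcal I$ and $\mathcal J$ be ideals on $\omega$ and let $X$ be a nonempty normal space. The following are equivalent: (1) $|X|<\omega$ and $\mathcal I\subseteq\mathcal J$; (2) for every sequence $(f_n)$ in $\mathcal C(X)$: $\mathcal I$-pointwise convergence to $0$ implies $\mathcal J$-uniform convergence to $0$; (3) for every $(f_n)$ in $\mathcal C(X)$: $\mathcal I$-quasi-normal convergence to $0$ implies $\mathcal J$-uniform convergence to $0$; (4) for every $(f_n)$ in $\mathcal C(X)$: $\mathcal I$-$\sigma$-uniform convergence to $0$ implies $\mathcal J$-uniform convergence to $0$.
   Context: An ideal on $\omega$ is a family $\mathcal I\subseteq\mathcal P(\omega)$ closed under finite unions and subsets, containing all finite sets, with $\omega\notin\mathcal I$. A real sequence $(a_n)$ is $\mathcal I$-convergent to $0$ if $\{n:|a_n|\ge\varepsilon\}\in\mathcal I$ for all $\varepsilon>0$. For a sequence $(f_n)$ of real functions on a set $X$: $\mathcal I$-pointwise convergence to $0$ means $(f_n(x))$ is $\mathcal I$-convergent to $0$ for each $x$; $\mathcal I$-uniform means $\{n:\exists x\in X\,(|f_n(x)|\ge\varepsilon)\}\in\mathcal I$ for each $\varepsilon>0$; $\mathcal I$-$\sigma$-uniform means $X=\bigcup_{k\in\omega}X_k$ with $(f_n\restriction X_k)$ $\mathcal I$-uniformly convergent to $0$ for each $k$; $\mathcal I$-quasi-normal means there is a sequence $(\varepsilon_n)$ of positive reals $\mathcal I$-convergent to $0$ with $\{n:|f_n(x)|\ge\varepsilon_n\}\in\mathcal I$ for each $x$.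 $\mathcal C(X)$ = continuous real functions on $X$. A normal space is a Hausdorff space in which disjoint closed sets have disjoint open neighbourhoods. *)

(* Defs.v *)
From HB Require Import structures.
From mathcomp Require Import all_boot all_order all_algebra.
From mathcomp Require Import all_classical all_reals all_analysis.
From mathcomp Require Import Rstruct Rstruct_topology.
From Stdlib Require Import Reals.
Set Implicit Arguments. Unset Strict Implicit. Unset Printing Implicit Defensive.
Import Order.TTheory GRing.Theory Num.Theory.
Local Open Scope classical_set_scope.
Local Open Scope ring_scope.

Definition is_ideal (I : set (set nat)) : Prop :=
  [/\ (forall A B, I A -> I B -> I (A `|` B)),
      (forall A B, B `<=` A -> I A -> I B),
      (forall A, finite_set A -> I A) &
      ~ I [set: nat]].

Definition Iconv0 (I : set (set nat)) (a : nat -> R) : Prop :=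
  forall eps : R, 0 < eps -> I [set n | eps <= `|a n|].

Definition normal_T2 (X : topologicalType) : Prop :=
  hausdorff_space X /\
  forall A B : set X, closed A -> closed B -> A `&` B = set0 ->
    exists U V : set X, [/\ open U, open V, A `<=` U, B `<=` V & U `&` V = set0].

Section conv.
Variable (X : topologicalType) (I : set (set nat)).

Definition Ipointwise0 (f : nat -> X -> R) : Prop :=
  forall x, Iconv0 I (fun n => f n x).

Definition Iuniform0_on (A : set X) (f : nat -> X -> R) : Prop :=
  forall eps : R, 0 < eps -> I [set n | exists x, A x /\ eps <= `|f n x|].

Definition Iuniform0 (f : nat -> X -> R) : Prop := Iuniform0_on [set: X] f.

Definition Isigma_uniform0 (f : nat -> X -> R) : Prop :=
  exists Xk : nat -> set X,
    \bigcup_k Xk k = [set: X] /\ forall k, Iuniform0_on (Xk k) f.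

Definition Iquasi_normal0 (f : nat -> X -> R) : Prop :=
  exists e : nat -> R,
    [/\ (forall n, 0 < e n), Iconv0 I e &
        forall x, I [set n | e n <= `|f n x|]].
End conv.

(* Main.v *)
Require Import Defs.
From mathcomp Require Import all_boot all_order all_algebra.
From mathcomp Require Import all_classical all_reals all_analysis.
From mathcomp Require Import Rstruct Rstruct_topology.
From Stdlib Require Import Reals.
Local Open Scope classical_set_scope.

Section Helpers.
Import Order.TTheory GRing.Theory Num.Theory.
Local Open Scope classical_set_scope.
Local Open Scope ring_scope.

Lemma step_split (X : topologicalType) (hX : hausdorff_space X) (W : set X) :
  open W -> infinite_set W -> exists O W' : set X,
  [/\ open O, O !=set0 & O `<=` W] /\ [/\ open W', infinite_set W', W' `<=` W & O `&` W' = set0].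
Proof.
move=> oW iW.
have [a Wa] := infinite_setN0 iW.
have [b [Wb /= ba]] := infinite_setN0 (infinite_setD iW (finite_set1 a)).
have ab : a != b by apply/eqP => eab; apply: ba; rewrite eab.
have hX' := hX; rewrite open_hausdorff in hX'.
have [[U V] /= [aU bV] [oU oV /eqP UV0]] := hX' a b ab.
set U' := W `&` U; set V' := W `&` V.
have oU' : open U' by exact: openI.
have oV' : open V' by exact: openI.
have U'V'0 : U' `&` V' = set0.
  apply/seteqP; split => // x [[_ Ux] [_ Vx]].
  by have : (U `&` V) x by []; rewrite UV0.
have V'cl : V' `&` closure U' = set0.
  apply/seteqP; split => // x [Vx clx].
  have nV : nbhs x V' by apply: open_nbhs_nbhs; split.
  have [y [Uy Vy]] := clx _ nV.
  by have : (U' `&` V') y by []; rewrite U'V'0.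
have [fin|inf] := pselect (finite_set (W `\` closure U')).
- have finV : finite_set V'.
    apply: sub_finite_set fin => x Vx; split; first by case: Vx.
    by move=> clx; have : (V' `&` closure U') x by []; rewrite V'cl.
  exists V', (W `\` V'); split; split => //.
  + by exists b; split => //; move/set_mem: bV.
  + by move=> x [].
  + rewrite setDE; apply: openI => //; apply: closed_openC.
    by apply: (iffLR accessible_finite_set_closed (hausdorff_accessible hX)).
  + exact: infinite_setD.
  + by apply/seteqP; split => // x [Vx [_ nVx]].
- exists U', (W `\` closure U'); split; split => //.
  + by exists a; split => //; move/set_mem: aU.
  + by move=> x [].
  + by rewrite setDE; apply: openI => //; apply: closed_openC; exact: closed_closure.
  + apply/seteqP; split => // x [Ux [_ nclx]]; apply: nclx.
    exact: subset_closure.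
Qed.

Lemma disjoint_opens (X : topologicalType) (hX : hausdorff_space X) :
  infinite_set [set: X] -> exists O : nat -> set X,
  (forall n, open (O n) /\ O n !=set0) /\
  (forall n m, n <> m -> O n `&` O m = set0).
Proof.
move=> iX.
have step' : forall W : set X, exists p : set X * set X, open W -> infinite_set W ->
   [/\ open p.1, p.1 !=set0 & p.1 `<=` W] /\
   [/\ open p.2, infinite_set p.2, p.2 `<=` W & p.1 `&` p.2 = set0].
  move=> W; have [[oW iW]|h] := pselect (open W /\ infinite_set W).
    have [ O1 [W1 H]] := @step_split X hX W oW iW.
    by exists (O1, W1).
  by exists (set0, set0) => oW iW; exfalso; apply: h.
have [g hg] := choice step'.
pose Ws := fun n => iter n (fun W => (g W).2) setT.
have hWs : forall n, open (Ws n) /\ infinite_set (Ws n).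
  elim=> [|n [ho hi]]; first by split => //; exact: openT.
  by have [_ [? ? _ _]] := hg _ ho hi.
have dec : forall n k, Ws (addn n k) `<=` Ws n.
  move=> n; elim=> [|k IH]; first by rewrite addn0.
  rewrite addnS /=; have [ho hi] := hWs (addn n k).
  have [_ [_ _ sub _]] := hg _ ho hi.
  exact: subset_trans sub IH.
have hlt : forall n m, leq n.+1 m -> (g (Ws n)).1 `&` (g (Ws m)).1 = set0.
  move=> n m nm; have [ho hi] := hWs n; have [_ [_ _ _ d]] := hg _ ho hi.
  have [hom him] := hWs m; have [[_ _ sm] _] := hg _ hom him.
  apply/seteqP; split => // x [Onx Omx].
  have : ((g (Ws n)).1 `&` (g (Ws n)).2) x.
    split => //; have := dec n.+1 (subn m n.+1); rewrite subnKC //.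
    by move=> /(_ x); apply; apply: sm.
  by rewrite d.
exists (fun n => (g (Ws n)).1); split.
  by move=> n; have [ho hi] := hWs n; have [[? ? _] _] := hg _ ho hi.
move=> n m /eqP; rewrite neq_ltn => /orP[nm|mn]; first exact: hlt.
by rewrite setIC; exact: hlt.
Qed.

Lemma bad_seq (X : topologicalType) (hXn : normal_T2 X) :
  infinite_set [set: X] -> exists f : nat -> X -> R,
  [/\ (forall n, continuous (f n)),
      (forall x, exists k, forall n, leq k n -> f n x = 0) &
      (forall n, exists x, f n x = 1)].
Proof.
move=> iX; have [hT nrm] := hXn.
have ns : normal_space X := (iffRL (@normal_openP R X)) nrm.
have sep := iffLR (@normal_separatorP R X) ns.
have [Os [hO dis]] := @disjoint_opens X hT iX.
have [xs hxs] := choice (fun n => (hO n).2).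
have us : forall n, uniform_separator (~` Os n) [set xs n].
  move=> n; apply: sep.
  - exact: open_closedC (hO n).1.
  - exact: accessible_closed_set1 (hausdorff_accessible hT) _.
  - apply/seteqP; split => // x [nOx /= e]; apply: nOx; rewrite e; exact: hxs.
exists (fun n => @Urysohn X R (~` Os n) [set xs n]); split.
- by move=> n; exact: Urysohn_continuous.
- move=> x; have [[m Om]|nm] := pselect (exists m, Os m x).
  + exists m.+1 => n mn.
    have nOn : ~ Os n x.
      move=> Onx; have nm : n <> m by move=> e; rewrite e ltnn in mn.
      by have : (Os n `&` Os m) x by []; rewrite dis.
    by apply: (Urysohn_sub0 (us n)); exists x.
  + exists 0%nat => n _; apply: (Urysohn_sub0 (us n)); exists x => //.
    by move=> Onx; apply: nm; exists n.
- move=> n; exists (xs n); apply: (Urysohn_sub1 (us n)); by exists (xs n).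
Qed.
Lemma archi_inv (eps : R) : 0 < eps -> exists k, forall n, leq k n -> (n.+1%:R)^-1 < eps.
Proof.
move=> e0; exists (Num.bound eps^-1) => n kn.
have ie0 : 0 < eps^-1 by rewrite invr_gt0.
have hb := archi_boundP (ltW ie0).
have hn : eps^-1 < n.+1%:R.
  apply: (lt_le_trans hb); rewrite ler_nat; exact: leqW.
rewrite -(invrK eps) ltf_pV2 ?posrE //; exact: ltr0Sn.
Qed.

Section Ideal.
Variable (I : set (set nat)) (hI : is_ideal I).

Lemma ideal_sub {A B} : B `<=` A -> I A -> I B.
Proof. by case: hI => _ h _ _; exact: h. Qed.

Lemma ideal_U A B : I A -> I B -> I (A `|` B).
Proof. by case: hI => h _ _ _; exact: h. Qed.

Lemma ideal_fin A : finite_set A -> I A.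
Proof. by case: hI => _ _ h _; exact: h. Qed.

Lemma ideal_event {P : nat -> Prop} {k : nat} : (forall n, leq k n -> ~ P n) -> I [set n | P n].
Proof.
move=> h; apply: (ideal_sub (A := `I_k)); last exact/ideal_fin/finite_II.
move=> n Pn /=; rewrite ltnNge; apply/negP => kn; exact: h kn Pn.
Qed.

Lemma ideal_seq (T : eqType) (S : T -> set nat) (l : seq T) :
  (forall x, I (S x)) -> I [set n | exists x, x \in l /\ S x n].
Proof.
move=> hS; elim: l => [|a l IH].
  apply: (ideal_sub (A := set0)); last exact/ideal_fin/finite_set0.
  by move=> n [x []].
apply: (ideal_sub (A := S a `|` [set n | exists x, x \in l /\ S x n])).
  move=> n [x []]; rewrite in_cons => /orP[/eqP <-|xl] Sx; first by left.
  by right; exists x.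
exact: ideal_U.
Qed.

Lemma einv_conv : Iconv0 I (fun n => (n.+1%:R)^-1).
Proof.
move=> eps e0; have [k hk] := @archi_inv eps e0.
apply: (ideal_event (k := k)) => n kn /=.
rewrite ger0_norm ?invr_ge0 ?ler0n // => h.
by have := lt_le_trans (hk n kn) h; rewrite ltxx.
Qed.

Lemma einv_gt0 n : 0 < ((n.+1%:R)^-1 : R).
Proof. by rewrite invr_gt0 ltr0Sn. Qed.

Variable X : topologicalType.

Lemma evz_quasi (f : nat -> X -> R) :
  (forall x, exists k, forall n, leq k n -> f n x = 0) -> Iquasi_normal0 I f.
Proof.
move=> hf; exists (fun n => (n.+1%:R)^-1); split.
- exact: einv_gt0.
- exact: einv_conv.
- move=> x; have [k hk] := hf x; apply: (ideal_event (k := k)) => n kn /=.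
  rewrite hk // normr0 => h; have := lt_le_trans (einv_gt0 n) h.
  by rewrite ltxx.
Qed.

Lemma evz_sigma (f : nat -> X -> R) :
  (forall x, exists k, forall n, leq k n -> f n x = 0) -> Isigma_uniform0 I f.
Proof.
move=> hf; exists (fun k => [set x | forall n, leq k n -> f n x = 0]); split.
  apply/seteqP; split => // x _; have [k hk] := hf x; by exists k.
move=> k eps e0; apply: (ideal_event (k := k)) => n kn [x [hx h]].
move: h; rewrite hx // normr0 => h.
by have := lt_le_trans e0 h; rewrite ltxx.
Qed.

Lemma quasi_pw (f : nat -> X -> R) : Iquasi_normal0 I f -> Ipointwise0 I f.
Proof.
move=> [e [e0 ce hx]] x eps eps0.
apply: (ideal_sub (A := [set n | e n <= `|f n x|] `|` [set n | eps <= `|e n|])).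
  move=> n /= h; have [le|lt] := leP (e n) `|f n x|; first by left.
  right; rewrite ger0_norm; last exact: ltW (e0 n).
  exact: le_trans h (ltW lt).
by apply: ideal_U; [exact: hx | exact: ce].
Qed.

Lemma sigma_pw (f : nat -> X -> R) : Isigma_uniform0 I f -> Ipointwise0 I f.
Proof.
move=> [Xk [cov hk]] x eps eps0.
have : (\bigcup_k Xk k) x by rewrite cov.
move=> [k _ xk]; apply: (ideal_sub (A := [set n | exists y, Xk k y /\ eps <= `|f n y|])).
  by move=> n h; exists x.
exact: hk.
Qed.

Definition fA (A : set nat) : nat -> X -> R := fun n _ => if pselect (A n) then 1 else 0.

Lemma fA_quasi A : I A -> Iquasi_normal0 I (fA A).
Proof.
move=> IA; exists (fun n => (n.+1%:R)^-1); split.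
- exact: einv_gt0.
- exact: einv_conv.
- move=> x; apply: (ideal_sub (A := A) ^~ IA) => n /=; rewrite /fA.
  destruct (pselect (A n)) as [An|nAn] => //=; rewrite normr0 => h.
  by have := lt_le_trans (einv_gt0 n) h; rewrite ltxx.
Qed.

Lemma fA_sigma A : I A -> Isigma_uniform0 I (fA A).
Proof.
move=> IA; exists (fun _ => setT); split.
  by apply/seteqP; split => // x _; exists 0%nat.
move=> k eps e0; apply: (ideal_sub (A := A) ^~ IA) => n [x [_]] /=; rewrite /fA.
destruct (pselect (A n)) as [An|nAn] => //=; rewrite normr0 => h.
by have := lt_le_trans e0 h; rewrite ltxx.
Qed.

End Ideal.

Lemma fin_unif (I J : set (set nat)) (X : topologicalType) (hI : is_ideal I)
  (fin : finite_set [set: X]) (IJ : I `<=` J) (f : nat -> X -> R) :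
  Ipointwise0 I f -> Iuniform0 J f.
Proof.
move=> pw eps e0; apply: IJ.
have [s hs] := iffLR (finite_seqP [set: X]) fin.
have := @ideal_seq I hI _ (fun x => [set n | eps <= `|f n x|]) s (fun x => pw x eps e0).
apply: ideal_sub => // n [x [_ h]]; exists x; split => //.
by have : [set: X] x by []; rewrite hs.
Qed.

Lemma toP1 (I J : set (set nat)) (X : topologicalType)
  (hI : is_ideal I) (hJ : is_ideal J)
  (hXne : [set: X] !=set0) (hXn : normal_T2 X)
  (Q : (nat -> X -> R) -> Prop)
  (Qev : forall f, (forall x, exists k, forall n, leq k n -> f n x = 0) -> Q f)
  (QA : forall A, I A -> Q (fA X A))
  (H : forall f, (forall n, continuous (f n)) -> Q f -> Iuniform0 J f) :
  finite_set [set: X] /\ I `<=` J.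
Proof.
have nJT : ~ J setT by case: hJ.
split.
- apply: contrapT => inf; have [f [cf ev one]] := @bad_seq X hXn inf.
  have := H f cf (Qev f ev) 1 ltr01 => Jf; apply: nJT.
  apply: (@ideal_sub J hJ _ _ ^~ Jf) => n _; have [x hx] := one n.
  by exists x; split => //; rewrite hx normr1.
- move=> A IA; have := H (fA X A) (fun n => @cst_continuous X R _) (QA A IA) 1 ltr01.
  apply: (@ideal_sub J hJ) => n An; have [x0 _] := hXne.
  exists x0; split => //; rewrite /fA.
  by destruct (pselect (A n)) as [An1|nAn] => //=; rewrite normr1.
Qed.

End Helpers.

Theorem proposition3p3 (I J : set (set nat)) (X : topologicalType)
  (hI : is_ideal I) (hJ : is_ideal J)
  (hXne : [set: X] !=set0) (hXn : normal_T2 X) :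
  let C := fun f : nat -> X -> R => forall n, continuous (f n) in
  let P1 := finite_set [set: X] /\ I `<=` J in
  let P2 := forall f, C f -> Ipointwise0 I f -> Iuniform0 J f in
  let P3 := forall f, C f -> Iquasi_normal0 I f -> Iuniform0 J f in
  let P4 := forall f, C f -> Isigma_uniform0 I f -> Iuniform0 J f in
  (P1 <-> P2) /\ (P1 <-> P3) /\ (P1 <-> P4).
Proof.
move=> C P1 P2 P3 P4.
have h12 : P1 -> P2 by move=> [fin IJ] f _; exact: fin_unif.
have h23 : P2 -> P3 by move=> h f cf q; apply: h cf _; exact: quasi_pw.
have h24 : P2 -> P4 by move=> h f cf q; apply: h cf _; exact: sigma_pw.
have h31 : P3 -> P1.
  move=> h; apply: (@toP1 I J X hI hJ hXne hXn (Iquasi_normal0 I)) => //.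
  - by move=> f; exact: evz_quasi.
  - by move=> A; exact: fA_quasi.
have h41 : P4 -> P1.
  move=> h; apply: (@toP1 I J X hI hJ hXne hXn (Isigma_uniform0 I)) => //.
  - by move=> f; exact: evz_sigma.
  - by move=> A; exact: fA_sigma.
split; [split=> [/h12|/h23/h31] //|split; split => //; by [move/h12/h23 | move/h12/h24]].
Qed.
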